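(* Let $C\in\mathbb{R}^{n\times n}$ be symmetric, $\rho>0$, and let $(\tilde\sigma^k,\sigma^k,y^k)$ be generated by the ADMM-BM algorithm described in the context, with Assumption A holding. Then for all $k\ge1$ there exists an element $(g_{\tilde\sigma},g_\sigma)$ of the limiting subdifferential of $G_\rho$ at $(\tilde\sigma^{k+1},\sigma^{k+1})$ such that $$\left\|\begin{matrix}g_{\tilde\sigma}\\ g_\sigma\end{matrix}\right\|_F\le\Big(2\|C\|+\rho+\frac{\|C\|^2}{\rho}\Big)\left\|\begin{matrix}\tilde\sigma^{k+1}-\tilde\sigma^k\\ \sigma^{k+1}-\sigma^k\end{matrix}\right\|_F.$$
   Context: $\langle A,B\rangle=\mathrm{Tr}(A^\top B)$, $\|\cdot\|_F$ Frobenius norm (of the vertically stacked matrices), $\|C\|$ spectral norm. For $\sigma\in\mathbb{R}^{n\times r}$, $\sigma_i$ is its $i$-th row; $\mathcal{M}=\{\sigma:\|\sigma_i\|=1\ \forall i\}$; $\mathcal{I}_S$ the indicator function of $S$. $G_\rho(\tilde\sigma,\sigma)=\langle C,\tilde\sigma\tilde\sigma^\top\rangle+\frac\rho2\|\tilde\sigma-\sigma\|_F^2+\sum_i\mathcal{I}_{\{\|u\|=1\}}(\tilde\sigma_i)$. ADMM-BM with parameter $\rho$: choose $\tilde\sigma^0\in\mathcal{M}$, $\sigma^0=\tilde\sigma^0$, $y^0=C\tilde\sigma^0$. For $k=0,1,\dots$: $\gamma^k=\sigma^k-\frac1\rho(y^k+C\sigma^k)$ with rows $\gamma_i^k$; $\tilde\sigma^{k+1}_i=\gamma_i^k/\|\gamma_i^k\|$;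 $\sigma^{k+1}=\tilde\sigma^{k+1}+\frac1\rho(y^k-C\tilde\sigma^{k+1})$; $y^{k+1}=y^k+\rho(\tilde\sigma^{k+1}-\sigma^{k+1})$. Assumption A: $\gamma_i^k\neq0$ for all $i,k$. *)

(* Defs.v *)
From HB Require Import structures.
From mathcomp Require Import all_boot all_order all_algebra.
From mathcomp Require Import boolp classical_sets reals constructive_ereal.
Set Implicit Arguments. Unset Strict Implicit. Unset Printing Implicit Defensive.
Import Order.TTheory GRing.Theory Num.Theory.
Local Open Scope ring_scope.
Local Open Scope classical_set_scope.

Section ADMMBM.
Variable R : realType.

Definition frob_inner (n r : nat) (A B : 'M[R]_(n, r)) : R := \tr (A^T *m B).

Definition frob (n r : nat) (A : 'M[R]_(n, r)) : R := Num.sqrt (frob_inner A A).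

(* Frobenius norm of the vertically stacked pair (A over B) *)
Definition frob2 (n r : nat) (A B : 'M[R]_(n, r)) : R :=
  Num.sqrt (frob_inner A A + frob_inner B B).

Definition spec_norm (n : nat) (C : 'M[R]_n) : R :=
  sup [set frob (C *m v) | v in [set v : 'cV[R]_n | frob v <= 1]].

Definition row_norm (n r : nat) (A : 'M[R]_(n, r)) (i : 'I_n) : R := frob (row i A).

Definition in_M (n r : nat) (A : 'M[R]_(n, r)) : Prop := forall i, row_norm A i = 1.

(* G_rho(st, s) = <C, st st^T> + rho/2 ||st - s||_F^2 + sum_i I_{||u||=1}(st_i) *)
Definition G_rho (n r : nat) (C : 'M[R]_n) (rho : R)
    (st s : 'M[R]_(n, r)) : \bar R :=
  if asbool (in_M st) then
    (frob_inner C (st *m st^T) + rho / 2 * frob (st - s) ^+ 2)%:E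
  else +oo%E.

(* Frechet (regular) subdifferential of F : M x M -> \bar R at (x1,x2):
   F(x) finite and liminf_{y -> x, y <> x} (F y - F x - <g, y - x>)/||y - x|| >= 0,
   written out in epsilon-delta form. *)
Definition frechet_subdiff (n r : nat) (F : 'M[R]_(n, r) -> 'M[R]_(n, r) -> \bar R)
    (x1 x2 g1 g2 : 'M[R]_(n, r)) : Prop :=
  F x1 x2 \is a fin_num /\
  forall eps : R, 0 < eps -> exists delta : R, 0 < delta /\
    forall y1 y2 : 'M[R]_(n, r), frob2 (y1 - x1) (y2 - x2) < delta ->
      (F x1 x2 + (frob_inner g1 (y1 - x1) + frob_inner g2 (y2 - x2)
                  - eps * frob2 (y1 - x1) (y2 - x2))%:E <= F y1 y2)%E.

Definition seq_cvg (u : nat -> R) (l : R) : Prop :=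
  forall e : R, 0 < e -> exists N : nat, forall k : nat, (N <= k)%N -> `|u k - l| < e.

Definition limiting_subdiff (n r : nat) (F : 'M[R]_(n, r) -> 'M[R]_(n, r) -> \bar R)
    (x1 x2 g1 g2 : 'M[R]_(n, r)) : Prop :=
  F x1 x2 \is a fin_num /\
  exists (xs1 xs2 gs1 gs2 : nat -> 'M[R]_(n, r)),
    (forall k, frechet_subdiff F (xs1 k) (xs2 k) (gs1 k) (gs2 k)) /\
    seq_cvg (fun k => frob2 (xs1 k - x1) (xs2 k - x2)) 0 /\
    seq_cvg (fun k => fine (F (xs1 k) (xs2 k))) (fine (F x1 x2)) /\
    seq_cvg (fun k => frob2 (gs1 k - g1) (gs2 k - g2)) 0.

Definition normalize_rows (n r : nat) (g : 'M[R]_(n, r)) : 'M[R]_(n, r) :=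
  \matrix_(i, j) (g i j / row_norm g i).

Definition admm_gamma (n r : nat) (C : 'M[R]_n) (rho : R)
    (s y : 'M[R]_(n, r)) : 'M[R]_(n, r) :=
  s - rho^-1 *: (y + C *m s).

Definition is_admm_bm (n r : nat) (C : 'M[R]_n) (rho : R)
    (st s y : nat -> 'M[R]_(n, r)) : Prop :=
  [/\ in_M (st 0%N), s 0%N = st 0%N, y 0%N = C *m st 0%N &
   forall k : nat,
     [/\ st k.+1 = normalize_rows (admm_gamma C rho (s k) (y k)),
         s k.+1 = st k.+1 + rho^-1 *: (y k - C *m st k.+1) &
         y k.+1 = y k + rho *: (st k.+1 - s k.+1)]].

Definition assumption_A (n r : nat) (C : 'M[R]_n) (rho : R)
    (s y : nat -> 'M[R]_(n, r)) : Prop :=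
  forall (k : nat) (i : 'I_n), row i (admm_gamma C rho (s k) (y k)) != 0.

End ADMMBM.

(* Main.v *)
Require Import Defs.
From HB Require Import structures.
From mathcomp Require Import all_boot all_order all_algebra.
From mathcomp Require Import boolp classical_sets reals constructive_ereal.
From mathcomp Require Import ring lra.
Import Order.TTheory GRing.Theory Num.Theory.
Local Open Scope ring_scope.
Local Open Scope classical_set_scope.

Lemma fiE {R : realType} {n r : nat} (A B : 'M[R]_(n, r)) :
  frob_inner A B = \sum_i \sum_j A i j * B i j.
Proof.
rewrite /frob_inner /mxtrace exchange_big /=; apply: eq_bigr => j _.
by rewrite !mxE; apply: eq_bigr => i _; rewrite mxE.
Qed.

Lemma fiC {R : realType} {n r : nat} (A B : 'M[R]_(n, r)) : frob_inner A B = frob_inner B A.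
Proof. by rewrite !fiE; apply: eq_bigr => i _; apply: eq_bigr => j _; rewrite mulrC. Qed.

Lemma fiDl {R : realType} {n r : nat} (A B D : 'M[R]_(n, r)) :
  frob_inner (A + B) D = frob_inner A D + frob_inner B D.
Proof.
rewrite !fiE -big_split; apply: eq_bigr => i _; rewrite -big_split.
by apply: eq_bigr => j _; rewrite !mxE mulrDl.
Qed.

Lemma fiNl {R : realType} {n r : nat} (A D : 'M[R]_(n, r)) :
  frob_inner (- A) D = - frob_inner A D.
Proof.
rewrite !fiE -sumrN; apply: eq_bigr => i _; rewrite -sumrN.
by apply: eq_bigr => j _; rewrite !mxE mulNr.
Qed.

Lemma fiZl {R : realType} {n r : nat} c (A D : 'M[R]_(n, r)) :
  frob_inner (c *: A) D = c * frob_inner A D.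
Proof.
rewrite !fiE mulr_sumr; apply: eq_bigr => i _; rewrite mulr_sumr.
by apply: eq_bigr => j _; rewrite !mxE mulrA.
Qed.

Lemma fiDr {R : realType} {n r : nat} (A B D : 'M[R]_(n, r)) :
  frob_inner D (A + B) = frob_inner D A + frob_inner D B.
Proof. by rewrite fiC fiDl !(fiC D). Qed.
Lemma fiNr {R : realType} {n r : nat} (A D : 'M[R]_(n, r)) :
  frob_inner D (- A) = - frob_inner D A.
Proof. by rewrite fiC fiNl fiC. Qed.
Lemma fiZr {R : realType} {n r : nat} c (A D : 'M[R]_(n, r)) :
  frob_inner D (c *: A) = c * frob_inner D A.
Proof. by rewrite fiC fiZl fiC. Qed.

Lemma fi_ge0 {R : realType} {n r : nat} (A : 'M[R]_(n, r)) : 0 <= frob_inner A A.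
Proof. by rewrite fiE; apply: sumr_ge0 => i _; apply: sumr_ge0 => j _; rewrite -expr2 sqr_ge0. Qed.

Lemma fi_eq0 {R : realType} {n r : nat} (A : 'M[R]_(n, r)) : frob_inner A A = 0 -> A = 0.
Proof.
rewrite fiE => /eqP; rewrite psumr_eq0; last first.
  by move=> i _; apply: sumr_ge0 => j _; rewrite -expr2 sqr_ge0.
move=> /allP H; apply/matrixP => i j; rewrite mxE.
have := H i (mem_index_enum _); rewrite /= psumr_eq0; last first.
  by move=> k _; rewrite -expr2 sqr_ge0.
move=> /allP /(_ j (mem_index_enum _)) /=.
by rewrite mulf_eq0 orbb => /eqP.
Qed.

Lemma frob_ge0 {R : realType} {n r : nat} (A : 'M[R]_(n, r)) : 0 <= frob A.
Proof. exact: sqrtr_ge0. Qed.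

Lemma frob_sqr {R : realType} {n r : nat} (A : 'M[R]_(n, r)) : frob A ^+ 2 = frob_inner A A.
Proof. by rewrite /frob sqr_sqrtr // fi_ge0. Qed.

Lemma fi_CS {R : realType} {n r : nat} (A B : 'M[R]_(n, r)) :
  frob_inner A B <= frob A * frob B.
Proof.
have hA := frob_sqr A; have hB := frob_sqr B.
have a0 := frob_ge0 A; have b0 := frob_ge0 B.
have := fi_ge0 (frob B *: A - frob A *: B).
rewrite !(fiDl, fiDr, fiNl, fiNr, fiZl, fiZr) (fiC B A) -hA -hB => h.
have [aE|aP] := eqVneq (frob A) 0.
  rewrite aE mul0r; have -> : A = 0 by apply: fi_eq0; rewrite -hA aE expr0n.
  by rewrite fiE big1 // => i _; rewrite big1 // => j _; rewrite mxE mul0r.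
have [bE|bP] := eqVneq (frob B) 0.
  rewrite bE mulr0; have -> : B = 0 by apply: fi_eq0; rewrite -hB bE expr0n.
  by rewrite fiE big1 // => i _; rewrite big1 // => j _; rewrite mxE mulr0.
have ab : 0 < frob A * frob B by rewrite mulr_gt0 // lt0r ?aP ?bP.
nra.
Qed.

Lemma frobN {R : realType} {n r : nat} (A : 'M[R]_(n, r)) : frob (- A) = frob A.
Proof. by rewrite /frob fiNl fiNr opprK. Qed.

Lemma frobZ {R : realType} {n r : nat} c (A : 'M[R]_(n, r)) : frob (c *: A) = `|c| * frob A.
Proof.
by rewrite /frob fiZl fiZr mulrA -expr2 sqrtrM ?sqr_ge0 // sqrtr_sqr.
Qed.

Lemma frobD {R : realType} {n r : nat} (A B : 'M[R]_(n, r)) : frob (A + B) <= frob A + frob B.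
Proof.
rewrite {1}/frob -[frob A + frob B]ger0_norm ?addr_ge0 ?frob_ge0 //.
rewrite -sqrtr_sqr ler_sqrt ?sqr_ge0 //.
rewrite !(fiDl, fiDr) (fiC B A) sqrrD !frob_sqr.
have := fi_CS A B; lra.
Qed.
Lemma frob0 {R : realType} {n r : nat} : frob (0 : 'M[R]_(n, r)) = 0.
Proof.
by rewrite /frob fiE big1 ?sqrtr0 // => i _; rewrite big1 // => j _; rewrite mxE mul0r.
Qed.

Lemma entry_le {R : realType} {n r : nat} (A : 'M[R]_(n, r)) i j :
  A i j ^+ 2 <= frob_inner A A.
Proof.
rewrite fiE (bigD1 i) //= (bigD1 j) //= -expr2 -addrA lerDl.
apply: addr_ge0; first by apply: sumr_ge0 => k _; rewrite -expr2 sqr_ge0.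
by apply: sumr_ge0 => l _; apply: sumr_ge0 => k _; rewrite -expr2 sqr_ge0.
Qed.

Lemma entry_le_frob {R : realType} {n r : nat} (A : 'M[R]_(n, r)) i j :
  `|A i j| <= frob A.
Proof. by rewrite -sqrtr_sqr ler_sqrt ?fi_ge0 // entry_le. Qed.

Definition specS {R : realType} {n : nat} (C : 'M[R]_n) :=
  [set frob (C *m v) | v in [set v : 'cV[R]_n | frob v <= 1]].

Lemma spec_ub {R : realType} {n : nat} (C : 'M[R]_n) : has_ubound (specS C).
Proof.
exists (Num.sqrt (\sum_i (\sum_k `|C i k|) ^+ 2)) => x [v /= hv <-].
rewrite /frob ler_sqrt; last by apply: sumr_ge0 => i _; rewrite sqr_ge0.
rewrite fiE; apply: ler_sum => i _; rewrite big_ord1 mxE.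
set X := \sum_k _.
have M0 : 0 <= \sum_k `|C i k| by apply: sumr_ge0 => k _.
have hX : `|X| <= \sum_k `|C i k|.
  apply: le_trans (ler_norm_sum _ _ _) _; apply: ler_sum => k _.
  rewrite normrM; have := entry_le_frob v k 0; have := normr_ge0 (C i k).
  have := normr_ge0 (v k 0); nra.
have := real_normK (num_real X); have := normr_ge0 X; nra.
Qed.

Lemma spec_ge0 {R : realType} {n : nat} (C : 'M[R]_n) : 0 <= spec_norm C.
Proof.
apply: (ub_le_sup (spec_ub C)); exists 0; rewrite /= ?frob0 ?ler01 //.
by rewrite mulmx0 frob0.
Qed.

Lemma frob_mul_col {R : realType} {n : nat} (C : 'M[R]_n) (v : 'cV[R]_n) :
  frob (C *m v) <= spec_norm C * frob v.
Proof.
have [fE|fP] := eqVneq (frob v) 0.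
  have -> : v = 0 by apply: fi_eq0; rewrite -frob_sqr fE expr0n.
  by rewrite mulmx0 !frob0 mulr0.
have fpos : 0 < frob v by rewrite lt0r fP frob_ge0.
have hw : frob ((frob v)^-1 *: v) = 1.
  by rewrite frobZ ger0_norm ?invr_ge0 ?frob_ge0 // mulVf.
have hS : specS C (frob (C *m ((frob v)^-1 *: v))).
  by exists ((frob v)^-1 *: v); rewrite //= hw.
have : frob (C *m ((frob v)^-1 *: v)) <= spec_norm C := ub_le_sup (spec_ub C) hS.
rewrite -scalemxAr frobZ ger0_norm ?invr_ge0 ?frob_ge0 // => h.
have -> : frob (C *m v) = frob v * ((frob v)^-1 * frob (C *m v)).
  by rewrite mulrA mulfV ?mul1r.
by rewrite [_ * frob v]mulrC ler_wpM2l ?frob_ge0.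
Qed.

Lemma fi_cols {R : realType} {n r : nat} (A : 'M[R]_(n, r)) :
  frob_inner A A = \sum_j frob_inner (col j A) (col j A).
Proof.
rewrite fiE exchange_big /=; apply: eq_bigr => j _; rewrite fiE.
by apply: eq_bigr => i _; rewrite big_ord1 !mxE.
Qed.

Lemma col_mulmx {R : realType} {n r : nat} (C : 'M[R]_n) (A : 'M[R]_(n, r)) j :
  col j (C *m A) = C *m col j A.
Proof. by apply/matrixP => i k; rewrite !mxE; apply: eq_bigr => l _; rewrite !mxE. Qed.

Lemma frob_mul {R : realType} {n r : nat} (C : 'M[R]_n) (A : 'M[R]_(n, r)) :
  frob (C *m A) <= spec_norm C * frob A.
Proof.
rewrite {1}/frob -[_ * frob A]ger0_norm ?mulr_ge0 ?spec_ge0 ?frob_ge0 //.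
rewrite -sqrtr_sqr ler_sqrt ?sqr_ge0 // exprMn frob_sqr !fi_cols mulr_sumr.
apply: ler_sum => j _; rewrite col_mulmx -!frob_sqr -exprMn.
have := frob_mul_col C (col j A); have := frob_ge0 (C *m col j A); nra.
Qed.

Lemma fi_mul_sym {R : realType} {n r : nat} (C : 'M[R]_n) (A B : 'M[R]_(n, r)) :
  C^T = C -> frob_inner (C *m A) B = frob_inner A (C *m B).
Proof. by move=> hC; rewrite /frob_inner trmx_mul hC mulmxA. Qed.

Lemma fi_quad {R : realType} {n r : nat} (C : 'M[R]_n) (A : 'M[R]_(n, r)) :
  C^T = C -> frob_inner C (A *m A^T) = frob_inner A (C *m A).
Proof. by move=> hC; rewrite /frob_inner hC mulmxA mxtrace_mulC. Qed.

Lemma row_norm_sqr {R : realType} {n r : nat} (A : 'M[R]_(n, r)) i :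
  row_norm A i ^+ 2 = \sum_j A i j ^+ 2.
Proof.
by rewrite /row_norm frob_sqr fiE big_ord1; apply: eq_bigr => j _; rewrite mxE expr2.
Qed.
Lemma real_bound {R : realType} (s rho x z f1 f2 : R) :
  0 <= s -> 0 < rho -> 0 <= x -> 0 <= z -> 0 <= f1 -> 0 <= f2 ->
  f1 <= s * x + s * z + rho^-1 * (s * (s * x)) + rho * z ->
  f2 <= s * x ->
  f1 ^+ 2 + f2 ^+ 2 <= (2 * s + rho + s ^+ 2 / rho) ^+ 2 * (x ^+ 2 + z ^+ 2).
Proof.
move=> s0 r0 x0 z0 g1 g2 h1 h2.
set t := s ^+ 2 / rho.
have t0 : 0 <= t by rewrite /t divr_ge0 ?sqr_ge0 ?ltW.
have rt : rho * t = s ^+ 2 by rewrite /t mulrC divfK ?gt_eqF.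
have h1' : f1 <= (s + t) * x + (s + rho) * z.
  suff E : rho^-1 * (s * (s * x)) = t * x by rewrite E in h1; lra.
  by rewrite /t; field; rewrite gt_eqF.
have e1 : f1 ^+ 2 <= ((s + t) * x + (s + rho) * z) ^+ 2.
  by rewrite ler_pXn2r ?nnegrE // addr_ge0 // mulr_ge0 // addr_ge0 // ltW.
have e2 : f2 ^+ 2 <= (s * x) ^+ 2 by rewrite ler_pXn2r ?nnegrE // mulr_ge0.
have e3 : ((s + t) * x + (s + rho) * z) ^+ 2 + (s * x) ^+ 2 <=
          ((2 * s + t) * x + (s + rho) * z) ^+ 2.
  have : 0 <= s * x * x * (s + t) by rewrite !mulr_ge0 // addr_ge0.
  have : 0 <= s * x * z * (s + rho) by rewrite !mulr_ge0 // addr_ge0 // ltW.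
  nra.
have e4 : ((2 * s + t) * x + (s + rho) * z) ^+ 2 <=
          ((2 * s + t) ^+ 2 + (s + rho) ^+ 2) * (x ^+ 2 + z ^+ 2).
  have := sqr_ge0 ((2 * s + t) * z - (s + rho) * x); nra.
have e5 : (2 * s + t) ^+ 2 + (s + rho) ^+ 2 <= (2 * s + rho + t) ^+ 2.
  have : 0 <= rho * s by rewrite mulr_ge0 // ltW.
  nra.
have xz : 0 <= x ^+ 2 + z ^+ 2 by rewrite addr_ge0 ?sqr_ge0.
have e6 := ler_wpM2r xz e5.
lra.
Qed.
Lemma norm_rows {R : realType} {n r : nat} (g : 'M[R]_(n, r)) :
  (forall i, row i g != 0) ->
  in_M (normalize_rows g) /\
  forall i j, g i j = row_norm g i * normalize_rows g i j.
Proof.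
move=> hg.
have nz : forall i, row_norm g i != 0.
  move=> i; apply/eqP => h; move: (hg i) => /eqP; apply; apply: fi_eq0.
  by rewrite -frob_sqr -/(row_norm g i) h expr0n.
split => [i|i j]; last by rewrite mxE mulrC divfK.
have sq : row_norm (normalize_rows g) i ^+ 2 = 1.
  rewrite row_norm_sqr.
  under eq_bigr => j _ do rewrite mxE expr_div_n.
  by rewrite -mulr_suml -row_norm_sqr mulfV // expf_neq0.
by rewrite -[row_norm _ i]ger0_norm ?frob_ge0 // -sqrtr_sqr sq sqrtr1.
Qed.

Lemma sphere_id {R : realType} {n r : nat} (a y : 'M[R]_(n, r)) i :
  in_M a -> in_M y ->
  \sum_j a i j * (y i j - a i j) = - (\sum_j (y i j - a i j) ^+ 2) / 2.
Proof.
move=> ha hy.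
have sa : \sum_j a i j ^+ 2 = 1 by rewrite -row_norm_sqr ha expr1n.
have sy : \sum_j y i j ^+ 2 = 1 by rewrite -row_norm_sqr hy expr1n.
have E : \sum_j ((y i j - a i j) ^+ 2 + 2 * (a i j * (y i j - a i j))) =
         \sum_j y i j ^+ 2 - \sum_j a i j ^+ 2.
  by rewrite -sumrB; apply: eq_bigr => j _; ring.
rewrite big_split /= -mulr_sumr sa sy in E.
lra.
Qed.

Lemma normal_bound {R : realType} {n r : nat} (a y g : 'M[R]_(n, r)) (lam : 'I_n -> R) :
  in_M a -> in_M y -> (forall i j, g i j = lam i * a i j) ->
  frob_inner (g - a) (y - a) <=
    (\sum_i `|lam i - 1|) / 2 * frob_inner (y - a) (y - a).
Proof.
move=> ha hy hg; rewrite !fiE mulr_sumr; apply: ler_sum => i _.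
have -> : \sum_j (g - a) i j * (y - a) i j =
          (lam i - 1) * \sum_j a i j * (y i j - a i j).
  by rewrite mulr_sumr; apply: eq_bigr => j _; rewrite !mxE hg; ring.
rewrite sphere_id //.
have -> : \sum_j (y - a) i j * (y - a) i j = \sum_j (y i j - a i j) ^+ 2.
  by apply: eq_bigr => j _; rewrite !mxE expr2.
set D := \sum_j _.
have D0 : 0 <= D by apply: sumr_ge0 => j _; rewrite sqr_ge0.
have hM : `|lam i - 1| <= \sum_i0 `|lam i0 - 1|.
  rewrite (bigD1 i) //= lerDl; exact: sumr_ge0.
have := ler_norm (- (lam i - 1)); rewrite normrN.
nra.
Qed.

Lemma fi00 {R : realType} {n r : nat} : frob_inner (0 : 'M[R]_(n, r)) 0 = 0.
Proof. by rewrite -frob_sqr frob0 expr0n. Qed.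

Local Close Scope classical_set_scope.

Theorem lemma7 (R : realType) (n r : nat) (C : 'M[R]_n) (rho : R)
    (st s y : nat -> 'M[R]_(n, r)) :
  C^T = C -> 0 < rho ->
  is_admm_bm C rho st s y ->
  assumption_A C rho s y ->
  forall k : nat, (1 <= k)%N ->
  exists g1 g2 : 'M[R]_(n, r),
    limiting_subdiff (G_rho C rho) (st k.+1) (s k.+1) g1 g2 /\
    frob2 g1 g2 <=
      (2 * spec_norm C + rho + spec_norm C ^+ 2 / rho)
      * frob2 (st k.+1 - st k) (s k.+1 - s k).
Proof.
move=> hC hrho [h0 hs0 hy0 hstep] hA k hk.
have rho0 : rho != 0 by rewrite gt_eqF.
have hy : forall m, y m = C *m st m.
  case=> [|m] //; have [_ hb hy'] := hstep m.
  by rewrite hy' hb; apply/matrixP => i j; rewrite !mxE; field.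
have [ha hb _] := hstep k.
have [aM hga] := norm_rows _ (hA k).
rewrite -ha in aM hga.
set gam := admm_gamma C rho (s k) (y k) in hga.
set a := st k.+1 in ha hb aM hga *.
set b := s k.+1 in hb *.
set a0 := st k in hga *.
set b0 := s k in hga *.
have hbE : b = a + rho^-1 *: (C *m a0 - C *m a) by rewrite hb hy.
pose g1 := C *m (a - a0) + C *m (b - b0) + rho^-1 *: (C *m (C *m (a - a0)))
           - rho *: (b - b0).
pose g2 := - (C *m (a - a0)).
have I2 : g2 = - (rho *: (a - b)).
  by rewrite /g2 hbE !mulmxBr; apply/matrixP => i j; rewrite !mxE; field.
have I1 : g1 = C *m a + C *m a + rho *: (a - b) + rho *: (gam - a).
  rewrite /g1 /gam /admm_gamma (hy k) -/a0 -/b0 hbE.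
  rewrite !(mulmxBr, mulmxDr, =^~ scalemxAr, mulmxBr).
  by apply/matrixP => i j; rewrite !mxE; field.
exists g1, g2; split.
  have FR : frechet_subdiff (G_rho C rho) a b g1 g2.
    split; first by rewrite /G_rho asboolT.
    move=> eps heps.
    set M := \sum_i `|row_norm gam i - 1|.
    have M0 : 0 <= M by apply: sumr_ge0.
    pose L := spec_norm C + rho * M / 2 + 1.
    have L0 : 0 < L.
      have : 0 <= rho * M / 2 by apply: divr_ge0; [apply: mulr_ge0; [exact: ltW|exact: M0]|by []].
      have := spec_ge0 C; rewrite /L; lra.
    exists (eps / L); split; first by rewrite divr_gt0.
    move=> y1 y2 hd.
    rewrite /G_rho (asboolT aM).
    case: (asboolP (in_M y1)) => hy1; last by rewrite leey.
    rewrite -EFinD lee_fin (fi_quad _ _ hC) (fi_quad _ _ hC) !frob_sqr I1 I2.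
    have ey12 : y1 - y2 = (a - b) + ((y1 - a) - (y2 - b)).
      by apply/matrixP => i j; rewrite !mxE; ring.
    have hB1 := normal_bound _ _ _ _ aM hy1 hga.
    rewrite ey12.
    set d1 := y1 - a in hd hB1 *.
    set d2 := y2 - b in hd *.
    have ey1 : y1 = a + d1 by rewrite /d1 addrC subrK.
    rewrite ey1.
    have s1 : frob_inner a (C *m d1) = frob_inner d1 (C *m a).
      by rewrite -fi_mul_sym // fiC.
    have s2 : frob_inner (C *m a) d1 = frob_inner d1 (C *m a) := fiC _ _.
    have s3 : frob_inner (a - b) (d1 - d2) =
              frob_inner (a - b) d1 - frob_inner (a - b) d2 by rewrite fiDr fiNr.
    have s4 : frob_inner (d1 - d2) (a - b) = frob_inner (a - b) (d1 - d2) := fiC _ _.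
    have B3 : 0 <= frob_inner (d1 - d2) (d1 - d2) := fi_ge0 _.
    have B2 : - frob_inner d1 (C *m d1) <= spec_norm C * frob_inner d1 d1.
      have := fi_CS (- d1) (C *m d1); rewrite fiNl frobN => h.
      have := frob_mul C d1; have := frob_ge0 d1; have := frob_ge0 (C *m d1).
      rewrite -frob_sqr; nra.
    have hF : frob d1 <= frob2 d1 d2.
      by rewrite ler_sqrt ?addr_ge0 ?fi_ge0 // lerDl fi_ge0.
    have hLF : frob2 d1 d2 * L < eps by rewrite -ltr_pdivlMr.
    have F0 : 0 <= frob2 d1 d2 by apply: sqrtr_ge0.
    have key : L * frob_inner d1 d1 <= eps * frob2 d1 d2.
      rewrite -frob_sqr.
      have h1 : frob d1 ^+ 2 <= frob2 d1 d2 ^+ 2.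
        by rewrite ler_pXn2r ?nnegrE ?frob_ge0.
      have h2 := ler_wpM2l (ltW L0) h1.
      have h3 := ler_wpM2l F0 (ltW hLF).
      apply: le_trans h2 _; rewrite expr2; lra.
    have B1 : rho * frob_inner (gam - a) d1 <= rho * (M / 2 * frob_inner d1 d1).
      by rewrite ler_wpM2l // ltW.
    move: s3 s4 B3 B1; move: (a - b) (d1 - d2) (gam - a) => u e ga s3 s4 B3 B1.
    clearbody d1 d2.
    rewrite mulmxDr !(fiDl, fiDr, fiNl, fiNr, fiZl, fiZr).
    rewrite /L in key.
    have B3' : 0 <= rho / 2 * frob_inner e e.
      by apply: mulr_ge0 => //; apply: divr_ge0 => //; apply: ltW.
    have B0 := fi_ge0 d1.
    nra.
  split; first by rewrite /G_rho asboolT.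
  exists (fun=> a), (fun=> b), (fun=> g1), (fun=> g2).
  have c0 : forall (A B : 'M[R]_(n, r)), seq_cvg (fun _ => frob2 (A - A) (B - B)) 0.
    move=> A B e he; exists 0%N => m _.
    by rewrite !subrr /frob2 fi00 addr0 sqrtr0 subrr normr0.
  split; first by [].
  split; first exact: c0.
  split; last exact: c0.
  by move=> e he; exists 0%N => m _; rewrite subrr normr0.
have sC0 := spec_ge0 C.
have iρ : 0 <= rho^-1 by rewrite invr_ge0 ltW.
rewrite /frob2 -(frob_sqr g1) -(frob_sqr g2) -(frob_sqr (a - a0)) -(frob_sqr (b - b0)).
set x := frob (a - a0); set z := frob (b - b0).
have K0 : 0 <= 2 * spec_norm C + rho + spec_norm C ^+ 2 / rho.
  have := ltW hrho; have := sqr_ge0 (spec_norm C); have : 0 <= spec_norm C ^+ 2 / rho by rewrite divr_ge0 ?sqr_ge0 ?ltW. lra.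
have T0 : 0 <= (2 * spec_norm C + rho + spec_norm C ^+ 2 / rho) *
               Num.sqrt (x ^+ 2 + z ^+ 2) by rewrite mulr_ge0 ?sqrtr_ge0.
rewrite -[_ * Num.sqrt _]ger0_norm // -sqrtr_sqr ler_sqrt ?sqr_ge0 //.
rewrite exprMn (sqr_sqrtr (_ : 0 <= x ^+ 2 + z ^+ 2)) ?addr_ge0 ?sqr_ge0 //.
apply: real_bound => //; rewrite ?frob_ge0 //.
- rewrite /g1.
  have e1 := frob_mul C (a - a0); have e2 := frob_mul C (b - b0).
  have e3 := frob_mul C (C *m (a - a0)).
  have e3' : rho^-1 * frob (C *m (C *m (a - a0))) <= rho^-1 * (spec_norm C * (spec_norm C * x)).
    by rewrite ler_wpM2l //; apply: le_trans e3 _; rewrite ler_wpM2l.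
  have t1 := frobD (C *m (a - a0) + C *m (b - b0) + rho^-1 *: (C *m (C *m (a - a0))))
                   (- (rho *: (b - b0))).
  have t2 := frobD (C *m (a - a0) + C *m (b - b0)) (rho^-1 *: (C *m (C *m (a - a0)))).
  have t3 := frobD (C *m (a - a0)) (C *m (b - b0)).
  rewrite frobN frobZ (ger0_norm (ltW hrho)) in t1.
  rewrite frobZ (ger0_norm iρ) in t2.
  rewrite -/x -/z in e1 e2 t1 t2 t3 e3 e3' *.
  lra.
- by rewrite /g2 frobN frob_mul.
Qed.
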